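(* Let $\rho$ be a representation of a unital operator algebra $\mathcal A$. If $\sigma$ is a coextension of $\rho$ which is an extremal coextension, and $\tau$ is a fully extremal extension of $\sigma$, then $\tau$ is a maximal representation (and hence a maximal dilation of $\rho$).
   Context: A representation of $\mathcal A$ on $H$ is a unital completely contractive homomorphism $\rho:\mathcal A\to B(H)$. For a representation $\sigma$ on $K\supseteq H$: $\sigma$ is a dilation of $\rho$ if $P_H\sigma(a)|_H=\rho(a)$ for all $a$; an extension if in addition $H$ is invariant for $\sigma(\mathcal A)$; a coextension if in addition $K\ominus H$ is invariant for $\sigma(\mathcal A)$. A representation $\rho$ on $H$ is an extremal coextension (resp. extremal extension, maximal) if every coextension (resp. extension, dilation) $\sigma$ of $\rho$ has $H$ as a reducing subspace, i.e. $\sigma=\rho\oplus\sigma'$. An extension $\tau$ of $\sigma$ acting on $L\supseteq K$ is fully extremal (with respect to $\sigma$) if whenever $\mu$ is a representation on a space containing $L$ which is a dilation of $\tau$ and an extension of $\sigma$, then $L$ reduces $\mu$, i.e. $\mu=\tau\oplus\mu'$. A maximal dilation of $\rho$ is a dilation of $\rho$ which is a maximal representation. *)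

(* Defs.v *)
From Stdlib Require Import Reals.
Open Scope R_scope.

Record C : Type := mkC { re : R ; im : R }.
Definition C0 : C := mkC 0 0.
Definition C1 : C := mkC 1 0.
Definition RtoC (r : R) : C := mkC r 0.
Definition Cadd (z w : C) : C := mkC (re z + re w) (im z + im w).
Definition Cmul (z w : C) : C :=
  mkC (re z * re w - im z * im w) (re z * im w + im z * re w).
Definition Cconj (z : C) : C := mkC (re z) (- im z).

(** * Complex Hilbert spaces
    Inner product: linear in the first variable, conjugate-linear in the second. *)
Record Hilbert : Type := {
  hcar :> Type;
  hzero : hcar;
  hadd : hcar -> hcar -> hcar;
  hopp : hcar -> hcar;
  hscal : C -> hcar -> hcar;
  hinner : hcar -> hcar -> C;
  hadd_assoc : forall x y z, hadd x (hadd y z) = hadd (hadd x y) z;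
  hadd_comm : forall x y, hadd x y = hadd y x;
  hadd_0 : forall x, hadd x hzero = x;
  hadd_opp : forall x, hadd x (hopp x) = hzero;
  hscal_1 : forall x, hscal C1 x = x;
  hscal_mul : forall a b x, hscal a (hscal b x) = hscal (Cmul a b) x;
  hscal_addr : forall a x y, hscal a (hadd x y) = hadd (hscal a x) (hscal a y);
  hscal_addl : forall a b x, hscal (Cadd a b) x = hadd (hscal a x) (hscal b x);
  hinner_addl : forall x y z, hinner (hadd x y) z = Cadd (hinner x z) (hinner y z);
  hinner_scall : forall a x y, hinner (hscal a x) y = Cmul a (hinner x y);
  hinner_conj : forall x y, hinner y x = Cconj (hinner x y);
  hinner_pos : forall x, im (hinner x x) = 0 /\ 0 <= re (hinner x x);
  hinner_def : forall x, hinner x x = C0 -> x = hzero;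
  hcomplete : forall u : nat -> hcar,
    (forall eps, 0 < eps -> exists N, forall m n, (N <= m)%nat -> (N <= n)%nat ->
        sqrt (re (hinner (hadd (u m) (hopp (u n))) (hadd (u m) (hopp (u n))))) < eps) ->
    exists l, forall eps, 0 < eps -> exists N, forall n, (N <= n)%nat ->
        sqrt (re (hinner (hadd (u n) (hopp l)) (hadd (u n) (hopp l)))) < eps
}.

Arguments hzero {h}.
Arguments hadd {h}.
Arguments hopp {h}.
Arguments hscal {h}.
Arguments hinner {h}.

Definition hsub {H : Hilbert} (x y : H) : H := hadd x (hopp y).
Definition hnorm {H : Hilbert} (x : H) : R := sqrt (re (hinner x x)).

Fixpoint sumR (n : nat) (f : nat -> R) : R :=
  match n with O => 0 | S k => sumR k f + f k end.
Fixpoint hsum {H : Hilbert} (n : nat) (f : nat -> H) : H :=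
  match n with O => hzero | S k => hadd (hsum k f) (f k) end.

Definition linear_map {H K : Hilbert} (T : H -> K) : Prop :=
  (forall x y, T (hadd x y) = hadd (T x) (T y)) /\
  (forall a x, T (hscal a x) = hscal a (T x)).

Definition op_norm_le {H K : Hilbert} (T : H -> K) (c : R) : Prop :=
  forall x, hnorm (T x) <= c * hnorm x.

Definition bounded_op {H : Hilbert} (T : H -> H) : Prop :=
  linear_map T /\ exists c, op_norm_le T c.

Definition unital_operator_algebra {H0 : Hilbert} (A : (H0 -> H0) -> Prop) : Prop :=
  (forall a, A a -> bounded_op a) /\
  A (fun x => x) /\
  (forall a b, A a -> A b -> A (fun x => hadd (a x) (b x))) /\
  (forall (c : C) a, A a -> A (fun x => hscal c (a x))) /\
  (forall a b, A a -> A b -> A (fun x => a (b x))) /\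
  (forall (u : nat -> H0 -> H0) (T : H0 -> H0),
      (forall n, A (u n)) -> bounded_op T ->
      (forall eps, 0 < eps -> exists N, forall n, (N <= n)%nat ->
          op_norm_le (fun x => hsub (u n x) (T x)) eps) ->
      A T).

(** norm bound for an n x n operator matrix [T i j] acting on H^n:
    ||[T_ij]|| <= c *)
Definition mat_norm_le {H : Hilbert} (n : nat) (T : nat -> nat -> H -> H) (c : R) : Prop :=
  forall x : nat -> H,
    sumR n (fun i => (hnorm (hsum n (fun j => T i j (x j)))) ^ 2)
      <= c ^ 2 * sumR n (fun j => (hnorm (x j)) ^ 2).

Definition representation {H0 : Hilbert} (A : (H0 -> H0) -> Prop)
    (H : Hilbert) (rho : (H0 -> H0) -> H -> H) : Prop :=
  (forall a, A a -> bounded_op (rho a)) /\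
  (forall x, rho (fun y => y) x = x) /\
  (forall a b, A a -> A b -> forall x,
      rho (fun y => hadd (a y) (b y)) x = hadd (rho a x) (rho b x)) /\
  (forall (c : C) a, A a -> forall x,
      rho (fun y => hscal c (a y)) x = hscal c (rho a x)) /\
  (forall a b, A a -> A b -> forall x,
      rho (fun y => a (b y)) x = rho a (rho b x)) /\
  (* completely contractive *)
  (forall (n : nat) (a : nat -> nat -> H0 -> H0) (c : R),
      0 <= c ->
      (forall i j, (i < n)%nat -> (j < n)%nat -> A (a i j)) ->
      mat_norm_le n a c ->
      mat_norm_le n (fun i j => rho (a i j)) c).

(** * Containment K ⊇ H : H is identified with the range of an isometry V : H -> K *)
Definition isometry {H K : Hilbert} (V : H -> K) : Prop :=
  linear_map V /\ forall x y, hinner (V x) (V y) = hinner x y.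

(** sigma (on K) is a dilation of rho (on H): P_H sigma(a)|_H = rho(a) *)
Definition dilation {H0 : Hilbert} (A : (H0 -> H0) -> Prop)
    {H K : Hilbert} (sigma : (H0 -> H0) -> K -> K) (rho : (H0 -> H0) -> H -> H)
    (V : H -> K) : Prop :=
  isometry V /\
  forall a, A a -> forall h h', hinner (sigma a (V h)) (V h') = hinner (rho a h) h'.

Definition invariant_range {H0 : Hilbert} (A : (H0 -> H0) -> Prop)
    {H K : Hilbert} (sigma : (H0 -> H0) -> K -> K) (V : H -> K) : Prop :=
  forall a, A a -> forall h, exists h', sigma a (V h) = V h'.

Definition invariant_perp {H0 : Hilbert} (A : (H0 -> H0) -> Prop)
    {H K : Hilbert} (sigma : (H0 -> H0) -> K -> K) (V : H -> K) : Prop :=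
  forall a, A a -> forall k : K, (forall h, hinner k (V h) = C0) ->
    forall h, hinner (sigma a k) (V h) = C0.

(** H reduces sigma, i.e. sigma = rho ⊕ sigma' *)
Definition reduces {H0 : Hilbert} (A : (H0 -> H0) -> Prop)
    {H K : Hilbert} (sigma : (H0 -> H0) -> K -> K) (V : H -> K) : Prop :=
  invariant_range A sigma V /\ invariant_perp A sigma V.

Definition extension {H0 : Hilbert} (A : (H0 -> H0) -> Prop)
    {H K : Hilbert} (sigma : (H0 -> H0) -> K -> K) (rho : (H0 -> H0) -> H -> H)
    (V : H -> K) : Prop :=
  dilation A sigma rho V /\ invariant_range A sigma V.

Definition coextension {H0 : Hilbert} (A : (H0 -> H0) -> Prop)
    {H K : Hilbert} (sigma : (H0 -> H0) -> K -> K) (rho : (H0 -> H0) -> H -> H)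
    (V : H -> K) : Prop :=
  dilation A sigma rho V /\ invariant_perp A sigma V.

Definition extremal_coextension {H0 : Hilbert} (A : (H0 -> H0) -> Prop)
    {H : Hilbert} (rho : (H0 -> H0) -> H -> H) : Prop :=
  forall (K : Hilbert) (sigma : (H0 -> H0) -> K -> K) (V : H -> K),
    representation A K sigma -> coextension A sigma rho V -> reduces A sigma V.

Definition extremal_extension {H0 : Hilbert} (A : (H0 -> H0) -> Prop)
    {H : Hilbert} (rho : (H0 -> H0) -> H -> H) : Prop :=
  forall (K : Hilbert) (sigma : (H0 -> H0) -> K -> K) (V : H -> K),
    representation A K sigma -> extension A sigma rho V -> reduces A sigma V.

Definition maximal {H0 : Hilbert} (A : (H0 -> H0) -> Prop)
    {H : Hilbert} (rho : (H0 -> H0) -> H -> H) : Prop :=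
  forall (K : Hilbert) (sigma : (H0 -> H0) -> K -> K) (V : H -> K),
    representation A K sigma -> dilation A sigma rho V -> reduces A sigma V.

Definition fully_extremal {H0 : Hilbert} (A : (H0 -> H0) -> Prop)
    {K L : Hilbert} (tau : (H0 -> H0) -> L -> L) (sigma : (H0 -> H0) -> K -> K)
    (W : K -> L) : Prop :=
  forall (M : Hilbert) (mu : (H0 -> H0) -> M -> M) (U : L -> M),
    representation A M mu -> dilation A mu tau U ->
    extension A mu sigma (fun k => U (W k)) -> reduces A mu U.

(* Main.v *)
Require Import Defs.
From Stdlib Require Import Reals.
From Stdlib Require Import Lra ClassicalEpsilon ProofIrrelevance.
Require Import Defs.
Open Scope R_scope.

Lemma Ceq : forall z w : C, re z = re w -> im z = im w -> z = w.
Proof. intros [a b] [c d]; simpl; intros; subst; reflexivity. Qed.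

Lemma abs_inv x b : Rabs x <= b -> - b <= x <= b.
Proof. intros H. pose proof (Rle_abs x). pose proof (Rle_abs (-x)).
  rewrite Rabs_Ropp in H1. lra. Qed.

Lemma hscal0 {H : Hilbert} (x : H) : hscal C0 x = hzero.
Proof.
  assert (E: hscal C0 x = hadd (hscal C0 x) (hscal C0 x)).
  { rewrite <- hscal_addl. f_equal. apply Ceq; simpl; ring. }
  set (v := hscal C0 x) in *.
  assert (E2: hadd (hadd v v) (hopp v) = hadd v (hopp v)) by (rewrite <- E; reflexivity).
  rewrite <- hadd_assoc, !hadd_opp, hadd_0 in E2. exact E2.
Qed.

Lemma hopp_scal {H : Hilbert} (x : H) : hopp x = hscal (mkC (-1) 0) x.
Proof.
  set (s := hscal (mkC (-1) 0) x).
  assert (E: hadd x s = hzero).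
  { unfold s. rewrite <- (hscal_1 _ x) at 1. rewrite <- hscal_addl.
    replace (Cadd C1 (mkC (-1) 0)) with C0 by (apply Ceq; simpl; ring). apply hscal0. }
  rewrite <- (hadd_0 _ (hopp x)). rewrite <- E. rewrite hadd_assoc.
  rewrite (hadd_comm _ (hopp x) x), hadd_opp. rewrite hadd_comm, hadd_0. reflexivity.
Qed.

Lemma inner_addr {H : Hilbert} (x y z : H) :
  hinner x (hadd y z) = Cadd (hinner x y) (hinner x z).
Proof.
  rewrite (hinner_conj _ (hadd y z) x), hinner_addl, (hinner_conj _ y x), (hinner_conj _ z x).
  destruct (hinner y x), (hinner z x). apply Ceq; simpl; ring.
Qed.

Lemma inner_scalr {H : Hilbert} (x : H) c y :
  hinner x (hscal c y) = Cmul (Cconj c) (hinner x y).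
Proof.
  rewrite (hinner_conj _ (hscal c y) x), hinner_scall, (hinner_conj _ y x).
  destruct c, (hinner y x). apply Ceq; simpl; ring.
Qed.

Lemma inner0l {H : Hilbert} (y : H) : hinner hzero y = C0.
Proof. rewrite <- (hscal0 (@hzero H)), hinner_scall. apply Ceq; simpl; ring. Qed.

Lemma re_sym {H : Hilbert} (x y : H) : re (hinner y x) = re (hinner x y).
Proof. rewrite hinner_conj. reflexivity. Qed.

Lemma re_inner_exp {H : Hilbert} (x y z w : H) (s t : R) :
  re (hinner (hadd x (hscal (RtoC s) y)) (hadd z (hscal (RtoC t) w))) =
  re (hinner x z) + t * re (hinner x w) + s * re (hinner y z) + s * t * re (hinner y w).
Proof.
  rewrite !hinner_addl, !inner_addr, !hinner_scall, !inner_scalr.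
  destruct (hinner x z), (hinner x w), (hinner y z), (hinner y w). simpl. ring.
Qed.

Lemma hnorm_pos {H : Hilbert} (x : H) : 0 <= hnorm x.
Proof. apply sqrt_pos. Qed.

Lemma nsq {H : Hilbert} (x : H) : hnorm x * hnorm x = re (hinner x x).
Proof. apply sqrt_sqrt. apply hinner_pos. Qed.

Lemma CS_re {H : Hilbert} (x y : H) : Rabs (re (hinner x y)) <= hnorm x * hnorm y.
Proof.
  set (a := re (hinner x x)). set (b := re (hinner x y)). set (c := re (hinner y y)).
  assert (key : forall t, 0 <= a + 2 * t * b + t * t * c).
  { intro t. pose proof (proj2 (hinner_pos _ (hadd x (hscal (RtoC t) y)))) as K.
    rewrite re_inner_exp, (re_sym x y) in K. unfold a, b, c. lra. }
  assert (Ha : 0 <= a) by apply hinner_pos.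
  assert (Hc : 0 <= c) by apply hinner_pos.
  assert (Hb : b * b <= a * c).
  { destruct (Req_dec c 0) as [E|E].
    - destruct (Req_dec b 0) as [F|F]. { rewrite F, E. lra. }
      specialize (key (- (a + 1) / (2 * b))).
      replace (a + 2 * (- (a + 1) / (2 * b)) * b + - (a + 1) / (2 * b) * (- (a + 1) / (2 * b)) * c)
        with (-1) in key by (rewrite E; field; auto). lra.
    - specialize (key (- b / c)).
      replace (a + 2 * (- b / c) * b + - b / c * (- b / c) * c) with (a - b * b / c) in key
        by (field; auto).
      assert (0 <= (a - b * b / c) * c) by (apply Rmult_le_pos; lra).
      replace ((a - b * b / c) * c) with (a * c - b * b) in H0 by (field; auto). lra. }
  pose proof (nsq x) as Nx. pose proof (nsq y) as Ny. fold a in Nx. fold c in Ny.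
  pose proof (hnorm_pos x). pose proof (hnorm_pos y).
  assert (Hr : Rabs b * Rabs b = b * b).
  { pose proof (Rsqr_abs b) as R. unfold Rsqr in R. lra. }
  pose proof (Rabs_pos b).
  set (p := hnorm x * hnorm y).
  assert (0 <= p) by (apply Rmult_le_pos; auto).
  assert (p * p = a * c) by (unfold p; rewrite <- Nx, <- Ny; ring).
  set (r := Rabs b) in *. nra.
Qed.

Lemma CS_im {H : Hilbert} (x y : H) : Rabs (im (hinner x y)) <= hnorm x * hnorm y.
Proof.
  replace (im (hinner x y)) with (re (hinner x (hscal (mkC 0 1) y))).
  2:{ rewrite inner_scalr. destruct (hinner x y). simpl. ring. }
  replace (hnorm y) with (hnorm (hscal (mkC 0 1) y)). apply CS_re.
  unfold hnorm. f_equal. rewrite hinner_scall, inner_scalr.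
  destruct (hinner y y). simpl. ring.
Qed.

Lemma inner_sub_l {H : Hilbert} (x y z : H) :
  hinner (hsub x y) z = mkC (re (hinner x z) - re (hinner y z)) (im (hinner x z) - im (hinner y z)).
Proof.
  unfold hsub. rewrite hinner_addl, hopp_scal, hinner_scall.
  destruct (hinner x z), (hinner y z). apply Ceq; simpl; ring.
Qed.

Lemma re_sub_sub {H : Hilbert} (x y l : H) :
  re (hinner (hsub x l) (hsub y l)) =
  re (hinner x y) - re (hinner x l) - re (hinner l y) + re (hinner l l).
Proof.
  unfold hsub. rewrite !hopp_scal. change (mkC (-1) 0) with (RtoC (-1)).
  rewrite re_inner_exp. ring.
Qed.

Lemma norm_sub_tri {H : Hilbert} (x y l : H) :
  hnorm (hsub x y) <= hnorm (hsub x l) + hnorm (hsub y l).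
Proof.
  pose proof (CS_re (hsub x l) (hsub y l)) as CS.
  pose proof (abs_inv _ _ CS) as [CS1 _].
  pose proof (nsq (hsub x y)) as N1. pose proof (nsq (hsub x l)) as N2.
  pose proof (nsq (hsub y l)) as N3.
  pose proof (re_sub_sub x y l) as E1.
  assert (E2 : re (hinner (hsub x y) (hsub x y)) = re (hinner x x) - re (hinner x y) - re (hinner y x) + re (hinner y y)).
  { rewrite <- (re_sub_sub x x y). f_equal. }
  rewrite re_sub_sub in N1, N2, N3.
  rewrite (re_sym x y) in N1. rewrite (re_sym x l) in N2. rewrite (re_sym y l) in N3.
  rewrite (re_sym y l) in E1.
  pose proof (hnorm_pos (hsub x y)). pose proof (hnorm_pos (hsub x l)).
  pose proof (hnorm_pos (hsub y l)).
  set (n1 := hnorm (hsub x y)) in *. set (n2 := hnorm (hsub x l)) in *.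
  set (n3 := hnorm (hsub y l)) in *.
  assert (n1 * n1 <= (n2 + n3) * (n2 + n3)) by nra.
  nra.
Qed.

Lemma lin_zero {H K : Hilbert} (T : H -> K) : linear_map T -> T hzero = hzero.
Proof. intros [_ Hs]. rewrite <- (@hscal0 H hzero) at 1. rewrite Hs. apply hscal0. Qed.

Lemma lin_sub {H K : Hilbert} (T : H -> K) x y : linear_map T -> T (hsub x y) = hsub (T x) (T y).
Proof. intros [Ha Hs]. unfold hsub. rewrite Ha, !hopp_scal, Hs. reflexivity. Qed.

Lemma small_zero x B : 0 <= B -> (forall eps, 0 < eps -> Rabs x <= B * eps) -> x = 0.
Proof.
  intros HB H. destruct (Req_dec x 0) as [E|E]; auto.
  pose proof (Rabs_pos_lt x E) as Hr. set (r := Rabs x) in *.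
  assert (He : 0 < r / (2 * (B + 1))) by (apply Rdiv_lt_0_compat; lra).
  specialize (H _ He).
  assert (Eq : r / 2 - B * (r / (2 * (B + 1))) = r / (2 * (B + 1))) by (field; lra).
  lra.
Qed.

Lemma bound_term {X : Hilbert} (T : X -> X) c (x y : X) eps :
  op_norm_le T c -> hnorm x <= eps ->
  Rabs (re (hinner (T x) y)) <= Rabs c * hnorm y * eps /\
  Rabs (im (hinner (T x) y)) <= Rabs c * hnorm y * eps.
Proof.
  intros HT Hx.
  assert (h1 : hnorm (T x) <= Rabs c * eps).
  { eapply Rle_trans; [apply HT|]. apply Rle_trans with (Rabs c * hnorm x).
    apply Rmult_le_compat_r; [apply hnorm_pos| apply Rle_abs].
    apply Rmult_le_compat_l; [apply Rabs_pos| assumption]. }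
  assert (h2 : hnorm (T x) * hnorm y <= Rabs c * hnorm y * eps).
  { replace (Rabs c * hnorm y * eps) with (Rabs c * eps * hnorm y) by ring.
    apply Rmult_le_compat_r; [apply hnorm_pos| auto]. }
  split; eapply Rle_trans; [apply CS_re | exact h2 | apply CS_im | exact h2].
Qed.

Definition Pw {H0 : Hilbert} (A : (H0 -> H0) -> Prop) {K M : Hilbert}
  (sigma : (H0 -> H0) -> K -> K) (mu : (H0 -> H0) -> M -> M) (f : K -> M) (n : M) : Prop :=
  exists k0 : K, forall a, A a -> forall k, hinner (mu a n) (f k) = hinner (sigma a k0) k.

Lemma rep_lin {H0 : Hilbert} (A : (H0 -> H0) -> Prop) (K : Hilbert) s a :
  representation A K s -> A a -> linear_map (s a).
Proof. intros [Hb _] Ha. exact (proj1 (Hb a Ha)). Qed.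

Lemma rep_bnd {H0 : Hilbert} (A : (H0 -> H0) -> Prop) (K : Hilbert) s a :
  representation A K s -> A a -> exists c, op_norm_le (s a) c.
Proof. intros [Hb _] Ha. exact (proj2 (Hb a Ha)). Qed.

Lemma rep_id {H0 : Hilbert} (A : (H0 -> H0) -> Prop) (K : Hilbert) s x :
  representation A K s -> s (fun y => y) x = x.
Proof. intros [_ [Hi _]]. apply Hi. Qed.

Lemma rep_comp {H0 : Hilbert} (A : (H0 -> H0) -> Prop) (K : Hilbert) s a b x :
  representation A K s -> A a -> A b -> s (fun y => a (b y)) x = s a (s b x).
Proof. intros [_ [_ [_ [_ [Hc _]]]]] Ha Hb. apply Hc; auto. Qed.

Lemma Pw_zero {H0 : Hilbert} (A : (H0 -> H0) -> Prop) {K M : Hilbert} sigma mu (f : K -> M) :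
  representation A K sigma -> representation A M mu -> Pw A sigma mu f hzero.
Proof.
  intros Hs Hm. exists hzero. intros a Ha k.
  rewrite (lin_zero _ (rep_lin _ _ _ _ Hm Ha)), (lin_zero _ (rep_lin _ _ _ _ Hs Ha)), !inner0l.
  reflexivity.
Qed.

Lemma Pw_add {H0 : Hilbert} (A : (H0 -> H0) -> Prop) {K M : Hilbert} sigma mu (f : K -> M) x y :
  representation A K sigma -> representation A M mu ->
  Pw A sigma mu f x -> Pw A sigma mu f y -> Pw A sigma mu f (hadd x y).
Proof.
  intros Hs Hm [k1 H1] [k2 H2]. exists (hadd k1 k2). intros a Ha k.
  rewrite (proj1 (rep_lin _ _ _ _ Hm Ha)), (proj1 (rep_lin _ _ _ _ Hs Ha)), !hinner_addl, H1, H2; auto.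
Qed.

Lemma Pw_scal {H0 : Hilbert} (A : (H0 -> H0) -> Prop) {K M : Hilbert} sigma mu (f : K -> M) c x :
  representation A K sigma -> representation A M mu ->
  Pw A sigma mu f x -> Pw A sigma mu f (hscal c x).
Proof.
  intros Hs Hm [k1 H1]. exists (hscal c k1). intros a Ha k.
  rewrite (proj2 (rep_lin _ _ _ _ Hm Ha)), (proj2 (rep_lin _ _ _ _ Hs Ha)), !hinner_scall, H1; auto.
Qed.

Lemma Pw_opp {H0 : Hilbert} (A : (H0 -> H0) -> Prop) {K M : Hilbert} sigma mu (f : K -> M) x :
  representation A K sigma -> representation A M mu ->
  Pw A sigma mu f x -> Pw A sigma mu f (hopp x).
Proof. intros. rewrite hopp_scal. apply Pw_scal; auto. Qed.

Lemma Pw_inv {H0 : Hilbert} (A : (H0 -> H0) -> Prop) {K M : Hilbert} sigma mu (f : K -> M) b x :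
  unital_operator_algebra A ->
  representation A K sigma -> representation A M mu -> A b ->
  Pw A sigma mu f x -> Pw A sigma mu f (mu b x).
Proof.
  intros HA Hs Hm Hb [k0 H1]. exists (sigma b k0). intros a Ha k.
  assert (Hab : A (fun y => a (b y))) by (apply HA; auto).
  specialize (H1 _ Hab k).
  rewrite (rep_comp _ _ _ _ _ _ Hm Ha Hb), (rep_comp _ _ _ _ _ _ Hs Ha Hb) in H1. exact H1.
Qed.

Lemma Pw_perp {H0 : Hilbert} (A : (H0 -> H0) -> Prop) {K M : Hilbert} sigma mu (f : K -> M) x :
  unital_operator_algebra A ->
  representation A K sigma -> representation A M mu ->
  Pw A sigma mu f x -> (forall h, hinner x (f h) = C0) ->
  forall a, A a -> forall h, hinner (mu a x) (f h) = C0.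
Proof.
  intros HA Hs Hm [k0 H1] Hp a Ha h.
  assert (Hid : A (fun y => y)) by apply HA.
  assert (E : k0 = hzero).
  { apply hinner_def. specialize (H1 _ Hid k0).
    rewrite (rep_id _ _ _ _ Hm), (rep_id _ _ _ _ Hs) in H1. rewrite <- H1. apply Hp. }
  rewrite H1 by auto. rewrite E, (lin_zero _ (rep_lin _ _ _ _ Hs Ha)). apply inner0l.
Qed.

Lemma Pw_lim {H0 : Hilbert} (A : (H0 -> H0) -> Prop) {K M : Hilbert} sigma mu (f : K -> M)
  (u : nat -> M) l :
  unital_operator_algebra A ->
  representation A K sigma -> representation A M mu -> isometry f ->
  (forall n, Pw A sigma mu f (u n)) ->
  (forall eps, 0 < eps -> exists N, forall n, (N <= n)%nat -> hnorm (hsub (u n) l) < eps) ->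
  Pw A sigma mu f l.
Proof.
  intros HA Hs Hm Hf Hu Hl.
  assert (Hid : A (fun y => y)) by apply HA.
  set (kf := fun n => proj1_sig (constructive_indefinite_description _ (Hu n))).
  assert (Hk : forall n a, A a -> forall k, hinner (mu a (u n)) (f k) = hinner (sigma a (kf n)) k).
  { intros n. exact (proj2_sig (constructive_indefinite_description _ (Hu n))). }
  assert (Hk1 : forall n k, hinner (u n) (f k) = hinner (kf n) k).
  { intros n k. specialize (Hk n _ Hid k).
    rewrite (rep_id _ _ _ _ Hm), (rep_id _ _ _ _ Hs) in Hk. exact Hk. }
  assert (Hb : forall m n, hnorm (hsub (kf m) (kf n)) <= hnorm (hsub (u m) (u n))).
  { intros m n. set (d := hsub (kf m) (kf n)). set (e := hsub (u m) (u n)).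
    assert (E : forall k, hinner e (f k) = hinner d k).
    { intro k. unfold e, d. rewrite !inner_sub_l, !Hk1. reflexivity. }
    pose proof (CS_re e (f d)) as CS. rewrite E in CS.
    assert (Nf : hnorm (f d) = hnorm d) by (unfold hnorm; rewrite (proj2 Hf); reflexivity).
    rewrite Nf, <- nsq in CS.
    pose proof (abs_inv _ _ CS) as [_ CS2].
    pose proof (hnorm_pos d). pose proof (hnorm_pos e). nra. }
  assert (Hc : exists k0, forall eps, 0 < eps -> exists N, forall n, (N <= n)%nat ->
      hnorm (hsub (kf n) k0) < eps).
  { apply (hcomplete K kf). intros eps He.
    destruct (Hl (eps / 2)) as [N HN]; [lra|]. exists N. intros m n Hm' Hn'.
    change (hnorm (hsub (kf m) (kf n)) < eps).
    eapply Rle_lt_trans; [apply Hb|]. eapply Rle_lt_trans; [apply (norm_sub_tri _ _ l)|].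
    pose proof (HN m Hm'). pose proof (HN n Hn'). lra. }
  destruct Hc as [k0 Hk0]. exists k0. intros a Ha k.
  destruct (rep_bnd _ _ _ _ Hm Ha) as [c1 Hc1].
  destruct (rep_bnd _ _ _ _ Hs Ha) as [c2 Hc2].
  set (B := Rabs c1 * hnorm (f k) + Rabs c2 * hnorm k).
  assert (HB : 0 <= B).
  { unfold B. pose proof (Rabs_pos c1). pose proof (Rabs_pos c2).
    pose proof (hnorm_pos (f k)). pose proof (hnorm_pos k). nra. }
  assert (Key : forall eps, 0 < eps ->
    Rabs (re (hinner (mu a l) (f k)) - re (hinner (sigma a k0) k)) <= B * eps /\
    Rabs (im (hinner (mu a l) (f k)) - im (hinner (sigma a k0) k)) <= B * eps).
  { intros eps He. destruct (Hl eps He) as [N1 HN1]. destruct (Hk0 eps He) as [N2 HN2].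
    set (j := Nat.max N1 N2).
    assert (J1 : hnorm (hsub (u j) l) <= eps) by (left; apply HN1; apply Nat.le_max_l).
    assert (J2 : hnorm (hsub (kf j) k0) <= eps) by (left; apply HN2; apply Nat.le_max_r).
    destruct (bound_term _ _ _ (f k) _ Hc1 J1) as [B1 B2].
    destruct (bound_term _ _ _ k _ Hc2 J2) as [B3 B4].
    rewrite (lin_sub _ _ _ (rep_lin _ _ _ _ Hm Ha)), inner_sub_l in B1, B2.
    rewrite (lin_sub _ _ _ (rep_lin _ _ _ _ Hs Ha)), inner_sub_l in B3, B4.
    simpl in B1, B2, B3, B4. rewrite Hk in B1, B2 by auto.
    apply abs_inv in B1, B2, B3, B4. unfold B.
    split; apply Rabs_le; lra. }
  apply Ceq; apply Rminus_diag_uniq; apply (small_zero _ B HB); intros eps He;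
    apply (Key eps He).
Qed.

Lemma sig_ext {T : Type} (P : T -> Prop) (x y : {z | P z}) :
  proj1_sig x = proj1_sig y -> x = y.
Proof. destruct x, y; simpl; intros; subst. f_equal. apply proof_irrelevance. Qed.

Definition subH (M : Hilbert) (P : M -> Prop) (P0 : P hzero)
  (Padd : forall x y, P x -> P y -> P (hadd x y))
  (Popp : forall x, P x -> P (hopp x))
  (Pscal : forall c x, P x -> P (hscal c x))
  (Plim : forall (u : nat -> M) l, (forall n, P (u n)) ->
     (forall eps, 0 < eps -> exists N, forall n, (N <= n)%nat -> hnorm (hsub (u n) l) < eps) -> P l)
  : Hilbert.
Proof.
  refine (@Build_Hilbert {x : M | P x} (exist _ hzero P0)
   (fun x y => exist _ (hadd (proj1_sig x) (proj1_sig y)) (Padd _ _ (proj2_sig x) (proj2_sig y)))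
   (fun x => exist _ (hopp (proj1_sig x)) (Popp _ (proj2_sig x)))
   (fun c x => exist _ (hscal c (proj1_sig x)) (Pscal c _ (proj2_sig x)))
   (fun x y => hinner (proj1_sig x) (proj1_sig y)) _ _ _ _ _ _ _ _ _ _ _ _ _ _).
  all: try (intros; apply sig_ext; simpl).
  - apply hadd_assoc.
  - apply hadd_comm.
  - apply hadd_0.
  - apply hadd_opp.
  - apply hscal_1.
  - apply hscal_mul.
  - apply hscal_addr.
  - apply hscal_addl.
  - intros; simpl; apply hinner_addl.
  - intros; simpl; apply hinner_scall.
  - intros; simpl; apply hinner_conj.
  - intros; simpl; apply hinner_pos.
  - apply hinner_def. assumption.
  - intros u Hc. destruct (hcomplete M (fun n => proj1_sig (u n)) Hc) as [l Hl].
    exists (exist _ l (Plim _ l (fun n => proj2_sig (u n)) Hl)). exact Hl.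
Defined.

Definition restr {H0 M : Hilbert} (A : (H0 -> H0) -> Prop) (mu : (H0 -> H0) -> M -> M)
  (P : M -> Prop) (Pinv : forall a, A a -> forall x, P x -> P (mu a x)) :
  (H0 -> H0) -> {x | P x} -> {x | P x} :=
  fun a x => match excluded_middle_informative (A a) with
  | left Ha => exist _ (mu a (proj1_sig x)) (Pinv a Ha _ (proj2_sig x))
  | right _ => x end.

Lemma restr_val {H0 M : Hilbert} A mu P Pinv a x :
  A a -> proj1_sig (@restr H0 M A mu P Pinv a x) = mu a (proj1_sig x).
Proof. intros Ha. unfold restr. destruct (excluded_middle_informative (A a)); [reflexivity|contradiction]. Qed.

Lemma sumR_ext n f g : (forall i, (i < n)%nat -> f i = g i) -> sumR n f = sumR n g.
Proof. induction n; simpl; intros; auto. rewrite IHn by auto. rewrite H by auto. reflexivity. Qed.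

Lemma hsum_ext {H : Hilbert} n (f g : nat -> H) : (forall i, (i < n)%nat -> f i = g i) -> hsum n f = hsum n g.
Proof. induction n; simpl; intros; auto. rewrite IHn by auto. rewrite H0 by auto. reflexivity. Qed.

Lemma iso_comp {H K L : Hilbert} (V : H -> K) (W : K -> L) :
  isometry V -> isometry W -> isometry (fun h => W (V h)).
Proof.
  intros [[Va Vs] Vi] [[Wa Ws] Wi]. split; [split|]; intros.
  - rewrite Va, Wa; reflexivity.
  - rewrite Vs, Ws; reflexivity.
  - rewrite Wi, Vi; reflexivity.
Qed.

Theorem propositionP :
  forall (H0 : Hilbert) (A : (H0 -> H0) -> Prop),
    unital_operator_algebra A ->
  forall (H : Hilbert) (rho : (H0 -> H0) -> H -> H),
    representation A H rho ->
  forall (K : Hilbert) (sigma : (H0 -> H0) -> K -> K) (V : H -> K),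
    representation A K sigma ->
    coextension A sigma rho V ->
    extremal_coextension A sigma ->
  forall (L : Hilbert) (tau : (H0 -> H0) -> L -> L) (W : K -> L),
    representation A L tau ->
    extension A tau sigma W ->
    fully_extremal A tau sigma W ->
    maximal A tau /\ dilation A tau rho (fun h => W (V h)).
Proof.
  intros H0 A HA H rho Hrho K sigma V Hsig Hco Hext L tau W Htau HextT Hfe.
  destruct HextT as [[HWiso HWdil] HWinv].
  destruct Hco as [[HViso HVdil] HVperp].
  split.
  2:{ split. apply iso_comp; auto. intros a Ha h h'. rewrite HWdil by auto. apply HVdil; auto. }
  intros M mu U Hmu [HUiso HUd].
  set (f := fun k => U (W k)).
  assert (Hfiso : isometry f) by (unfold f; apply (iso_comp W U); auto).
  assert (Hfd : forall a, A a -> forall h h', hinner (mu a (f h)) (f h') = hinner (sigma a h) h').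
  { intros a Ha h h'. unfold f. rewrite HUd by auto. apply HWdil; auto. }
  set (P := Pw A sigma mu f).
  set (N := subH M P (Pw_zero A sigma mu f Hsig Hmu)
        (fun x y => Pw_add A sigma mu f x y Hsig Hmu)
        (fun x => Pw_opp A sigma mu f x Hsig Hmu)
        (fun c x => Pw_scal A sigma mu f c x Hsig Hmu)
        (fun u l Hu Hl => Pw_lim A sigma mu f u l HA Hsig Hmu Hfiso Hu Hl)).
  set (Pinv := fun b (Hb : A b) x (Hx : P x) => Pw_inv A sigma mu f b x HA Hsig Hmu Hb Hx).
  set (sig' := (restr A mu P Pinv : (H0 -> H0) -> N -> N)).
  assert (PF : forall k, P (f k)) by (intro k; exists k; intros; apply Hfd; auto).
  set (V' := (fun k => exist _ (f k) (PF k)) : K -> N).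
  assert (Hrep : representation A N sig').
  { pose proof Hmu as [Hm1 [Hm2 [Hm3 [Hm4 [Hm5 Hm6]]]]].
    pose proof HA as [_ [HAid [HAadd [HAscal [HAcomp _]]]]].
    split; [|split; [|split; [|split; [|split]]]].
    - intros a Ha. split. split.
      + intros x y. apply sig_ext. unfold sig'. rewrite restr_val by auto. simpl.
        rewrite !restr_val by auto. apply (rep_lin _ _ _ _ Hmu Ha).
      + intros c x. apply sig_ext. unfold sig'. rewrite restr_val by auto. simpl.
        rewrite !restr_val by auto. apply (rep_lin _ _ _ _ Hmu Ha).
      + destruct (rep_bnd _ _ _ _ Hmu Ha) as [c Hc]. exists c. intro x.
        change (hnorm (proj1_sig (sig' a x)) <= c * hnorm (proj1_sig x)).
        unfold sig'. rewrite restr_val by auto. apply Hc.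
    - intro x. apply sig_ext. unfold sig'. rewrite restr_val by auto. apply Hm2.
    - intros a b Ha Hb x. apply sig_ext. unfold sig'. rewrite restr_val by (apply HA; auto).
      simpl. rewrite !restr_val by auto. apply Hm3; auto.
    - intros c a Ha x. apply sig_ext. unfold sig'. rewrite restr_val by (apply HAscal; auto).
      simpl. rewrite !restr_val by auto. apply Hm4; auto.
    - intros a b Ha Hb x. apply sig_ext. unfold sig'. rewrite restr_val by (apply HA; auto).
      rewrite !restr_val by auto. apply Hm5; auto.
    - intros n a c Hc HAa Hmat x.
      assert (PH : forall (g : nat -> N) m, proj1_sig (hsum m g) = hsum m (fun j => proj1_sig (g j))).
      { intros g m. induction m; simpl; [reflexivity|]. rewrite IHm. reflexivity. }
      change (sumR n (fun i => hnorm (proj1_sig (hsum n (fun j => sig' (a i j) (x j)))) ^ 2)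
        <= c ^ 2 * sumR n (fun j => hnorm (proj1_sig (x j)) ^ 2)).
      erewrite sumR_ext.
      2:{ intros i Hi. rewrite PH.
          rewrite (hsum_ext n _ (fun j => mu (a i j) (proj1_sig (x j)))). reflexivity.
          intros j Hj. unfold sig'. apply restr_val. apply HAa; auto. }
      apply (Hm6 n a c Hc HAa Hmat (fun j => proj1_sig (x j))). }
  assert (Hcoext : coextension A sig' sigma V').
  { split; [split|].
    - split; [split|].
      + intros x y. apply sig_ext. simpl. apply (proj1 Hfiso).
      + intros c x. apply sig_ext. simpl. apply (proj1 Hfiso).
      + intros x y. simpl. apply (proj2 Hfiso).
    - intros a Ha h h'.
      change (hinner (proj1_sig (sig' a (V' h))) (f h') = hinner (sigma a h) h').
      unfold sig'. rewrite restr_val by auto. apply Hfd; auto.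
    - intros a Ha k Hk h.
      change (hinner (proj1_sig (sig' a k)) (f h) = C0).
      unfold sig'. rewrite restr_val by auto.
      apply (Pw_perp A sigma mu f (proj1_sig k) HA Hsig Hmu (proj2_sig k)); auto.
      }
  destruct (Hext N sig' V' Hrep Hcoext) as [Hinv _].
  assert (Kinv : forall a, A a -> forall k, exists k', mu a (f k) = f k').
  { intros a Ha k. destruct (Hinv a Ha k) as [k' E]. exists k'.
    apply (f_equal (@proj1_sig _ _)) in E. unfold sig' in E. rewrite restr_val in E by auto.
    exact E. }
  apply (Hfe M mu U Hmu (conj HUiso HUd)).
  split; [split; [exact Hfiso | exact Hfd] | exact Kinv].
Qed.
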